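(* Suppose each local cost $f_i$ is $L_i$-smooth for some $L_i>0$, the aggregate cost is $f(x)=g(Hx)$ for an $\alpha$-strongly convex ($\alpha>0$), $\mathbf{L}$-smooth $g:\mathbb{R}^m\to\mathbb{R}$ and $H\in\mathbb{R}^{m\times p}$, $f$ has a minimizer, and $D:=\sup_{x\in X^*}(\sum_{j=1}^n\|\nabla f_j(x)\|^2)^{1/2}<\infty$. Let $L=\max_iL_i$ and $C_2=\frac{2\mathbf{L}\alpha c_H}{\mathbf{L}+\alpha}$. Assume $t(k)=J\in\mathbb{N}$ for all $k\ge0$ and $$0<\mu\le\min\Big\{\frac{2C_H}{\mathbf{L}+\alpha},\ \frac{C_2}{C_2+L(1+\sqrt2)}\cdot\frac{1-\beta^J}{L\beta^J}\Big\}.$$ Set $A_0=\|\bar{\mathbf{x}}_0-[\bar{\mathbf{x}}_0]\|$, $B_0=\|\bar{\mathbf{x}}_0-\mathbf{x}_0\|$, $\gamma=\frac{1-\sqrt{1-C_2\mu}}{\mu L}$ and $$R=\max\Big\{A_0,\ B_0/\gamma,\ \frac{\mu D\beta^J}{\gamma-(\mu L+\gamma(1+\mu L))\beta^J}\Big\}.$$ Then for the NEAR-DGD$^+$ iterates and all $k\ge0$, $$\|\bar{\mathbf{x}}_{k+1}-[\bar{\mathbf{x}}_{k+1}]\|\le(\sqrt{1-C_2\mu})^k(A_0+\mu LB_0)+\frac{\mu L\beta^J}{1-\beta^J}\Big(\frac{\mu(2LR+D)}{1-\sqrt{1-C_2\mu}}+B_0\Big)$$ and $$\|\bar{\mathb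f{x}}_k-\mathbf{x}_k\|\le(\beta^J)^kB_0+\frac{\mu\beta^J(2LR+D)}{1-\beta^J}.$$
   Context: Let $n,p\in\mathbb{N}$. $W$ is an $n\times n$ doubly stochastic matrix whose associated directed graph is strongly connected with a self-loop at every vertex; $1_n$ is the all-ones vector and $\beta\in[0,1)$ is the spectral norm of $W-\frac1n1_n1_n^\top$. $f_i:\mathbb{R}^p\to\mathbb{R}$, $f=\frac1n\sum_if_i$, $X^*$ the set of minimizers of $f$ (closed convex since $f$ is convex) and $[x]$ the Euclidean projection of $x$ onto $X^*$; for $\mathbf{z}=1_n\otimes z$ we write $[\mathbf{z}]=1_n\otimes[z]$. $h$ is $L$-smooth if $\|\nabla h(x)-\nabla h(y)\|\le L\|x-y\|$; $\alpha$-strongly convex if $h(y)\ge h(x)+\langle y-x,\nabla h(x)\rangle+\frac\alpha2\|y-x\|^2$. $c_H>0$ is a Hoffman coefficient: $\|Hx-H[x]\|^2\ge c_H\|x-[x]\|^2$ for all $x$; $C_H=1/\|H\|_2^2$ with $\|H\|_2$ the operator norm. NEAR-DGD$^+$: $\mathbf{x}_{k+1}=(W^{t(k)}\otimes I_p)(\mathbf{x}_k-\mu\nabla F(\mathbf{x}_k))$ where $\nabla F(\mathbf{x})=(\nabla f_1(x_1)^\top,\dots,\nabla f_n(x_n)^\top)^\top$ for $\mathbf{x}=(x_1^\top,\dots,x_n^\top)^\top$, $\otimes$ the Kronecker product; $\bar x_k=\frac1n\sum_ix_{i,k}$ and $\bar{\mathbf{x}}_k=1_n\otimes\bar x_k$.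 Norms are Euclidean. *)

(* Defs.v *)
From HB Require Import structures.
From mathcomp Require Import all_boot all_order all_algebra.
From mathcomp Require Import boolp classical_sets reals.
Set Implicit Arguments. Unset Strict Implicit. Unset Printing Implicit Defensive.
Import Order.TTheory GRing.Theory Num.Theory.
Local Open Scope ring_scope.
Local Open Scope classical_set_scope.

Section Defs.
Variable R : realType.

Definition dotv (p : nat) (u v : 'cV[R]_p) : R := \sum_(i < p) u i 0 * v i 0.
Definition norm2 (p : nat) (u : 'cV[R]_p) : R := Num.sqrt (dotv u u).

(* Euclidean norm of a stacked vector x = (x_1^T, ..., x_n^T)^T in R^{np} *)
Definition snorm (n p : nat) (x : 'I_n -> 'cV[R]_p) : R :=
  Num.sqrt (\sum_(i < n) norm2 (x i) ^+ 2).

Definition opnorm (m p : nat) (A : 'M[R]_(m, p)) : R :=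
  sup [set norm2 (A *m x) | x in [set x : 'cV[R]_p | norm2 x <= 1]].

Definition is_gradient (p : nat) (h : 'cV[R]_p -> R) (g : 'cV[R]_p -> 'cV[R]_p) :=
  forall x (eps : R), 0 < eps -> exists2 delta : R, 0 < delta &
    forall y, norm2 (y - x) < delta ->
      `|h y - h x - dotv (g x) (y - x)| <= eps * norm2 (y - x).

Definition L_smooth (p : nat) (h : 'cV[R]_p -> R) (gh : 'cV[R]_p -> 'cV[R]_p) (L : R) :=
  is_gradient h gh /\ forall x y, norm2 (gh x - gh y) <= L * norm2 (x - y).

Definition strongly_convex (p : nat) (h : 'cV[R]_p -> R) (gh : 'cV[R]_p -> 'cV[R]_p) (a : R) :=
  forall x y, h x + dotv (y - x) (gh x) + a / 2 * norm2 (y - x) ^+ 2 <= h y.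

Definition doubly_stochastic (n : nat) (W : 'M[R]_n) :=
  (forall i j, 0 <= W i j) /\ (forall i, \sum_j W i j = 1) /\ (forall j, \sum_i W i j = 1).

Definition strongly_connected_selfloops (n : nat) (W : 'M[R]_n) :=
  (forall i, 0 < W i i) /\
  (forall i j, connect (fun a b : 'I_n => 0 < W a b) i j).

Definition minimizers (p : nat) (f : 'cV[R]_p -> R) : set 'cV[R]_p :=
  [set x | forall y, f x <= f y].

Definition is_proj (p : nat) (X : set 'cV[R]_p) (x y : 'cV[R]_p) :=
  X y /\ forall z, X z -> norm2 (x - y) <= norm2 (x - z).

Definition avg (n p : nat) (x : 'I_n -> 'cV[R]_p) : 'cV[R]_p :=
  (n%:R)^-1 *: \sum_(i < n) x i.

(* NEAR-DGD+ : x_{k+1} = (W^{t(k)} (x) I_p)(x_k - mu grad F(x_k)) *)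
Definition near_dgd_plus (n p : nat) (W : 'M[R]_n) (t : nat -> nat) (mu : R)
    (gf : 'I_n -> 'cV[R]_p -> 'cV[R]_p) (x : nat -> 'I_n -> 'cV[R]_p) :=
  forall k i, x k.+1 i = \sum_(j < n) (W ^+ t k) i j *: (x k j - mu *: gf j (x k j)).

End Defs.

(* Main.v *)
Require Import Defs.
From HB Require Import structures.
From mathcomp Require Import all_boot all_order all_algebra.
From mathcomp Require Import boolp classical_sets reals.
From mathcomp Require Import ring lra.
Import Order.TTheory GRing.Theory Num.Theory.
Local Open Scope ring_scope.
Local Open Scope classical_set_scope.
Set Implicit Arguments. Unset Strict Implicit. Unset Printing Implicit Defensive.
Section Vec.
Variable R : realType.
Implicit Types (a b : R).

Lemma dotvC p (u v : 'cV[R]_p) : dotv u v = dotv v u.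
Proof. by rewrite /dotv; apply: eq_bigr => i _; rewrite mulrC. Qed.

Lemma dotvDl p (u v w : 'cV[R]_p) : dotv (u + v) w = dotv u w + dotv v w.
Proof. by rewrite /dotv -big_split; apply: eq_bigr => i _; rewrite !mxE mulrDl. Qed.

Lemma dotvZl p a (u w : 'cV[R]_p) : dotv (a *: u) w = a * dotv u w.
Proof. by rewrite /dotv mulr_sumr; apply: eq_bigr => i _; rewrite !mxE mulrA. Qed.

Lemma dotvNl p (u w : 'cV[R]_p) : dotv (- u) w = - dotv u w.
Proof. by rewrite -scaleN1r dotvZl mulN1r. Qed.

Lemma dotvBl p (u v w : 'cV[R]_p) : dotv (u - v) w = dotv u w - dotv v w.
Proof. by rewrite dotvDl dotvNl. Qed.

Lemma dotvDr p (u v w : 'cV[R]_p) : dotv w (u + v) = dotv w u + dotv w v.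
Proof. by rewrite dotvC dotvDl !(dotvC w). Qed.

Lemma dotvZr p a (u w : 'cV[R]_p) : dotv w (a *: u) = a * dotv w u.
Proof. by rewrite dotvC dotvZl dotvC. Qed.

Lemma dotvNr p (u w : 'cV[R]_p) : dotv w (- u) = - dotv w u.
Proof. by rewrite dotvC dotvNl dotvC. Qed.

Lemma dotvBr p (u v w : 'cV[R]_p) : dotv w (u - v) = dotv w u - dotv w v.
Proof. by rewrite dotvDr dotvNr. Qed.

Lemma dotv0l p (w : 'cV[R]_p) : dotv 0 w = 0.
Proof. by rewrite /dotv big1 // => i _; rewrite mxE mul0r. Qed.

Lemma dotv0r p (w : 'cV[R]_p) : dotv w 0 = 0.
Proof. by rewrite dotvC dotv0l. Qed.

Lemma dotv_ge0 p (u : 'cV[R]_p) : 0 <= dotv u u.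
Proof. by rewrite /dotv; apply: sumr_ge0 => i _; rewrite -expr2 sqr_ge0. Qed.

Lemma dotv_eq0 p (u : 'cV[R]_p) : dotv u u = 0 -> u = 0.
Proof.
move=> h; apply/matrixP => i j; rewrite (ord1 j) mxE.
have := @psumr_eq0P _ _ xpredT (fun i : 'I_p => u i 0 * u i 0).
move=> /(_ (fun i _ => ltac:(rewrite -expr2 sqr_ge0 //)) h i isT).
by move/eqP; rewrite mulf_eq0 orbb => /eqP.
Qed.

Lemma norm2_ge0 p (u : 'cV[R]_p) : 0 <= norm2 u.
Proof. exact: sqrtr_ge0. Qed.

Lemma norm2_sq p (u : 'cV[R]_p) : norm2 u ^+ 2 = dotv u u.
Proof. by rewrite /norm2 sqr_sqrtr // dotv_ge0. Qed.

Lemma norm2_eq0 p (u : 'cV[R]_p) : norm2 u = 0 -> u = 0.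
Proof. by move=> h; apply: dotv_eq0; rewrite -norm2_sq h expr0n. Qed.

Lemma norm2_0 p : norm2 (0 : 'cV[R]_p) = 0.
Proof. by rewrite /norm2 dotv0l sqrtr0. Qed.

Lemma CS p (u v : 'cV[R]_p) : dotv u v <= norm2 u * norm2 v.
Proof.
set A := norm2 u; set B := norm2 v.
have hA : 0 <= A := norm2_ge0 u. have hB : 0 <= B := norm2_ge0 v.
have h0 := dotv_ge0 (B *: u - A *: v).
rewrite dotvBl !dotvBr !dotvZl !dotvZr -!norm2_sq -/A -/B (dotvC v u) in h0.
have [hAB|hAB] := eqVneq (A * B) 0.
  move: (hAB) => /eqP; rewrite mulf_eq0 => /orP[] /eqP h.
    by rewrite (norm2_eq0 h) dotv0l hAB.
  by rewrite (norm2_eq0 h) dotv0r hAB.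
have pAB : 0 < A * B by rewrite lt0r hAB mulr_ge0.
have : A * B * (dotv u v) <= A * B * (A * B) by nra.
by rewrite ler_pM2l.
Qed.

Lemma CSabs p (u v : 'cV[R]_p) : `|dotv u v| <= norm2 u * norm2 v.
Proof.
have h1 := CS u v; have h2 := CS (- u) v.
rewrite dotvNl in h2.
have e : norm2 (- u) = norm2 u by rewrite /norm2 dotvNl dotvNr opprK.
rewrite e in h2.
by rewrite ler_norml h1 andbT lerNl.
Qed.

Lemma norm2Z p a (u : 'cV[R]_p) : norm2 (a *: u) = `|a| * norm2 u.
Proof. by rewrite /norm2 dotvZl dotvZr mulrA -expr2 sqrtrM ?sqr_ge0 // sqrtr_sqr. Qed.

Lemma norm2N p (u : 'cV[R]_p) : norm2 (- u) = norm2 u.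
Proof. by rewrite -scaleN1r norm2Z normrN1 mul1r. Qed.

Lemma norm2B p (u v : 'cV[R]_p) : norm2 (u - v) = norm2 (v - u).
Proof. by rewrite -norm2N opprB. Qed.

Lemma norm2D p (u v : 'cV[R]_p) : norm2 (u + v) <= norm2 u + norm2 v.
Proof.
have h1 : 0 <= norm2 u + norm2 v by rewrite addr_ge0 ?norm2_ge0.
rewrite -(ler_pXn2r (n:=2)) ?nnegrE ?norm2_ge0 //.
rewrite norm2_sq dotvDl !dotvDr (dotvC v u) sqrrD !norm2_sq.
have := CS u v; lra.
Qed.

Lemma norm2_sum p (I : finType) (F : I -> 'cV[R]_p) :
  norm2 (\sum_i F i) <= \sum_i norm2 (F i).
Proof.
elim/big_ind2 : _ => //; first by rewrite norm2_0.
move=> a1 a2 b1 b2 h1 h2; apply: le_trans (norm2D _ _) _; exact: lerD.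
Qed.

Lemma dotv_sq_expand p (u v : 'cV[R]_p) :
  norm2 (u - v) ^+ 2 = norm2 u ^+ 2 - 2 * dotv u v + norm2 v ^+ 2.
Proof. rewrite !norm2_sq dotvBl !dotvBr (dotvC v u); ring. Qed.

Lemma dotv_trmx m p (H : 'M[R]_(m, p)) (u : 'cV[R]_m) (v : 'cV[R]_p) :
  dotv (H^T *m u) v = dotv u (H *m v).
Proof.
rewrite /dotv.
under eq_bigr => i _ do rewrite !mxE big_distrl /=.
rewrite exchange_big /=; apply: eq_bigr => j _.
rewrite !mxE big_distrr /=; apply: eq_bigr => i _; rewrite !mxE; ring.
Qed.

Lemma le_sqrt_sq a (X Y : R) : 0 <= X -> 0 <= Y -> X ^+ 2 <= a * Y ^+ 2 ->
  X <= Num.sqrt a * Y.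
Proof.
move=> hX hY h.
have [ha|ha] := lerP 0 a.
  rewrite -(ler_pXn2r (n:=2)) ?nnegrE ?mulr_ge0 ?sqrtr_ge0 //.
  by rewrite exprMn sqr_sqrtr.
have : X ^+ 2 <= 0 by apply: le_trans h _; rewrite mulr_le0_ge0 ?sqr_ge0 // ltW.
move=> h2; have -> : X = 0 by nra.
by rewrite mulr_ge0 ?sqrtr_ge0.
Qed.

End Vec.
Section Stack.
Variable R : realType.
Implicit Types (a b : R).

Definition en n (a : 'I_n -> R) : R := Num.sqrt (\sum_i a i ^+ 2).

Lemma en_col n (a : 'I_n -> R) : en a = norm2 (\col_i a i).
Proof. by rewrite /en /norm2 /dotv; congr Num.sqrt; apply: eq_bigr => i _; rewrite !mxE expr2. Qed.

Lemma en_ge0 n (a : 'I_n -> R) : 0 <= en a.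
Proof. exact: sqrtr_ge0. Qed.

Lemma en_sq n (a : 'I_n -> R) : en a ^+ 2 = \sum_i a i ^+ 2.
Proof. by rewrite /en sqr_sqrtr // sumr_ge0 // => i _; rewrite sqr_ge0. Qed.

Lemma en_mono n (a b : 'I_n -> R) : (forall i, 0 <= a i <= b i) -> en a <= en b.
Proof.
move=> h; rewrite /en ler_sqrt ?sumr_ge0 // => [|i _]; last by rewrite sqr_ge0.
apply: ler_sum => i _; have /andP[h1 h2] := h i.
by rewrite ler_pXn2r // nnegrE (le_trans h1 h2).
Qed.

Lemma enD n (a b : 'I_n -> R) : en (fun i => a i + b i) <= en a + en b.
Proof.
rewrite !en_col; have -> : \col_i (a i + b i) = \col_i a i + \col_i b i.
  by apply/matrixP => i j; rewrite !mxE.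
exact: norm2D.
Qed.

Lemma sum_le_en n (a : 'I_n -> R) : \sum_i a i <= Num.sqrt n%:R * en a.
Proof.
have := CS (\col_i a i) (\col_(i < n) (1 : R)).
have -> : dotv (\col_i a i) (\col_(i < n) (1:R)) = \sum_i a i.
  by apply: eq_bigr => i _; rewrite !mxE mulr1.
have -> : norm2 (\col_(i < n) (1 : R)) = Num.sqrt n%:R.
  rewrite /norm2 /dotv (eq_bigr (fun=> 1)) ?sumr_const ?card_ord //.
  by move=> i _; rewrite !mxE mulr1.
by rewrite -en_col mulrC.
Qed.

Lemma snorm_en n p (z : 'I_n -> 'cV[R]_p) : snorm z = en (fun i => norm2 (z i)).
Proof. by []. Qed.

Lemma snorm_ge0 n p (z : 'I_n -> 'cV[R]_p) : 0 <= snorm z.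
Proof. exact: sqrtr_ge0. Qed.

Lemma snorm_mono n p (z : 'I_n -> 'cV[R]_p) (c : 'I_n -> R) :
  (forall i, norm2 (z i) <= c i) -> snorm z <= en c.
Proof. by move=> h; apply: en_mono => i; rewrite norm2_ge0 h. Qed.

Lemma snorm_le n p (z w : 'I_n -> 'cV[R]_p) (K : R) : 0 <= K ->
  (forall i, norm2 (z i) <= K * norm2 (w i)) -> snorm z <= K * snorm w.
Proof.
move=> hK h; apply: le_trans (snorm_mono h) _.
have eK : K = Num.sqrt (K ^+ 2) by rewrite sqrtr_sqr ger0_norm.
rewrite [X in _ <= X * _]eK /en /snorm -sqrtrM ?sqr_ge0 //.
rewrite ler_sqrt ?mulr_ge0 ?sumr_ge0 // => [|i _]; last by rewrite sqr_ge0.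
by rewrite mulr_sumr; apply: ler_sum => i _; rewrite exprMn.
Qed.

Lemma snormD n p (z w : 'I_n -> 'cV[R]_p) :
  snorm (fun i => z i + w i) <= snorm z + snorm w.
Proof.
apply: le_trans (snorm_mono (c := fun i => norm2 (z i) + norm2 (w i)) _) _.
  by move=> i; exact: norm2D.
exact: enD.
Qed.

Lemma snormN n p (z : 'I_n -> 'cV[R]_p) : snorm (fun i => - z i) = snorm z.
Proof. by rewrite /snorm; congr Num.sqrt; apply: eq_bigr => i _; rewrite norm2N. Qed.

Lemma snormZ n p (c : R) (z : 'I_n -> 'cV[R]_p) :
  snorm (fun i => c *: z i) = `|c| * snorm z.
Proof.
have eK : `|c| = Num.sqrt (`|c| ^+ 2) by rewrite sqrtr_sqr normr_id.
rewrite [X in _ = X * _]eK /snorm -sqrtrM ?sqr_ge0 // mulr_sumr.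
by congr Num.sqrt; apply: eq_bigr => i _; rewrite norm2Z exprMn.
Qed.

Lemma snorm_const n p (v : 'cV[R]_p) : snorm (fun _ : 'I_n => v) = Num.sqrt n%:R * norm2 v.
Proof.
rewrite /snorm sumr_const card_ord -[_ *+ n]mulr_natr sqrtrM ?sqr_ge0 //.
by rewrite sqrtr_sqr ger0_norm ?norm2_ge0 // mulrC.
Qed.

Lemma snorm_ext n p (z w : 'I_n -> 'cV[R]_p) : (forall i, z i = w i) -> snorm z = snorm w.
Proof. by move=> h; rewrite /snorm; congr Num.sqrt; apply: eq_bigr => i _; rewrite h. Qed.

Lemma snorm_cols n p (z : 'I_n -> 'cV[R]_p) :
  snorm z ^+ 2 = \sum_(r < p) norm2 (\col_i z i r 0) ^+ 2.
Proof.
rewrite /snorm sqr_sqrtr ?sumr_ge0 // => [|i _]; last by rewrite sqr_ge0.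
under eq_bigr => i _ do rewrite norm2_sq.
under [RHS]eq_bigr => r _ do rewrite norm2_sq.
rewrite /dotv exchange_big /=; apply: eq_bigr => r _; apply: eq_bigr => i _.
by rewrite !mxE.
Qed.

Lemma opnorm_has_sup m p (A : 'M[R]_(m, p)) :
  has_sup [set norm2 (A *m x) | x in [set x : 'cV[R]_p | norm2 x <= 1]].
Proof.
split; first by exists (norm2 (A *m 0)); exists 0 => //=; rewrite norm2_0 ler01.
exists (Num.sqrt (\sum_i norm2 (\col_j A i j) ^+ 2)).
move=> _ [x /= hx <-].
rewrite /norm2 ler_sqrt ?sumr_ge0 // => [|i _]; last by rewrite sqr_ge0.
apply: ler_sum => i _.
have -> : (A *m x) i 0 = dotv (\col_j A i j) x.
  by rewrite !mxE; apply: eq_bigr => j _; rewrite !mxE.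
rewrite -expr2 -(norm2_sq (\col_j A i j)).
have h := CSabs (\col_j A i j) x.
have h0 := norm2_ge0 (\col_j A i j). have h1 := norm2_ge0 x.
have h2 : `|dotv (\col_j A i j) x| <= norm2 (\col_j A i j).
  apply: le_trans h _; rewrite -{2}(mulr1 (norm2 _)); exact: ler_wpM2l.
move: h2; rewrite ler_norml sqr_sqrtr ?sqr_ge0 // => /andP[h3 h4]; nra.
Qed.

Lemma opnorm_ge0 m p (A : 'M[R]_(m, p)) : 0 <= opnorm A.
Proof.
have h : [set norm2 (A *m x) | x in [set x : 'cV[R]_p | norm2 x <= 1]] (norm2 (A *m 0)).
  by exists 0 => //=; rewrite norm2_0 ler01.
have := sup_upper_bound (opnorm_has_sup A) h.
by rewrite mulmx0 norm2_0.
Qed.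

Lemma opnorm_ub m p (A : 'M[R]_(m, p)) (v : 'cV[R]_p) :
  norm2 (A *m v) <= opnorm A * norm2 v.
Proof.
have [h0|h0] := eqVneq (norm2 v) 0.
  by rewrite (norm2_eq0 h0) mulmx0 norm2_0 norm2_0 mulr0.
have hp : 0 < norm2 v by rewrite lt0r h0 norm2_ge0.
set u := (norm2 v)^-1 *: v.
have hu : norm2 u = 1 by rewrite /u norm2Z ger0_norm ?invr_ge0 ?norm2_ge0 // mulVf.
have h : [set norm2 (A *m x) | x in [set x : 'cV[R]_p | norm2 x <= 1]] (norm2 (A *m u)).
  by exists u => //=; rewrite hu.
have := sup_upper_bound (opnorm_has_sup A) h.
rewrite -/(opnorm A).
rewrite /u -scalemxAr norm2Z ger0_norm ?invr_ge0 ?norm2_ge0 //.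
by rewrite ler_pdivrMl // mulrC.
Qed.

Lemma opnorm_gt0_ex m p (A : 'M[R]_(m, p)) : 0 < opnorm A -> exists v, 0 < norm2 (A *m v).
Proof.
move=> h; apply: contrapT => hn.
have : opnorm A <= 0.
  apply: ge_sup; first by exists (norm2 (A *m 0)); exists 0 => //=; rewrite norm2_0 ler01.
  move=> _ [x _ <-]; rewrite leNgt; apply/negP => hx; apply: hn; by exists x.
by rewrite leNgt h.
Qed.

Lemma trmx_ub m p (A : 'M[R]_(m, p)) (u : 'cV[R]_m) :
  norm2 (A^T *m u) <= opnorm A * norm2 u.
Proof.
set w := A^T *m u.
have h1 : norm2 w ^+ 2 <= norm2 u * (opnorm A * norm2 w).
  rewrite norm2_sq {1}/w dotv_trmx.
  apply: le_trans (CS _ _) _; apply: ler_wpM2l; first exact: norm2_ge0.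
  exact: opnorm_ub.
have hw := norm2_ge0 w; have hu := norm2_ge0 u; have ho := opnorm_ge0 A.
have [e|ne] := eqVneq (norm2 w) 0; first by rewrite e mulr_ge0.
have hp : 0 < norm2 w by rewrite lt0r ne hw.
rewrite expr2 mulrCA mulrA in h1.
by rewrite ler_pM2r // in h1; rewrite mulrC.
Qed.

Definition app n p (A : 'M[R]_n) (z : 'I_n -> 'cV[R]_p) : 'I_n -> 'cV[R]_p :=
  fun i => \sum_j A i j *: z j.

Lemma app_norm n p (A : 'M[R]_n) (z : 'I_n -> 'cV[R]_p) :
  snorm (app A z) <= opnorm A * snorm z.
Proof.
have ho := opnorm_ge0 A.
rewrite -(ler_pXn2r (n:=2)) ?nnegrE ?mulr_ge0 ?snorm_ge0 //.
rewrite exprMn !snorm_cols mulr_sumr; apply: ler_sum => r _.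
have -> : \col_i app A z i r 0 = A *m \col_i z i r 0.
  apply/matrixP => i j; rewrite !mxE /app summxE; apply: eq_bigr => k _.
  by rewrite !mxE.
rewrite -exprMn ler_pXn2r ?nnegrE ?mulr_ge0 ?norm2_ge0 //.
exact: opnorm_ub.
Qed.

Lemma app_mul n p (A B : 'M[R]_n) (z : 'I_n -> 'cV[R]_p) :
  app (A *m B) z = app A (app B z).
Proof.
apply: funext => i; rewrite /app.
under eq_bigr => j _ do rewrite mxE scaler_suml.
rewrite exchange_big /=; apply: eq_bigr => k _.
rewrite scaler_sumr; apply: eq_bigr => j _; by rewrite scalerA.
Qed.

Lemma app_sub n p (A B : 'M[R]_n) (z : 'I_n -> 'cV[R]_p) i :
  app (A - B) z i = app A z i - app B z i.
Proof.
rewrite /app -sumrB; apply: eq_bigr => j _; by rewrite !mxE scalerBl.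
Qed.

Lemma app_lin n p (A : 'M[R]_n) (z w : 'I_n -> 'cV[R]_p) i :
  app A (fun j => z j - w j) i = app A z i - app A w i.
Proof. by rewrite /app -sumrB; apply: eq_bigr => j _; rewrite scalerBr. Qed.

End Stack.
Section Grad.
Variable R : realType.
Implicit Types (a b : R).

Lemma dotv_suml p (I : finType) (F : I -> 'cV[R]_p) w :
  dotv (\sum_i F i) w = \sum_i dotv (F i) w.
Proof.
elim/big_rec2 : _ => [|i a1 a2 _ <-]; first exact: dotv0l.
by rewrite dotvDl.
Qed.

Lemma grad_comp m p (g : 'cV[R]_m -> R) gg (H : 'M[R]_(m, p)) :
  is_gradient g gg ->
  is_gradient (fun y => g (H *m y)) (fun y => H^T *m gg (H *m y)).
Proof.
move=> hg x eps he.
set K := opnorm H + 1.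
have hK : 0 < K by rewrite /K ltr_wpDl ?opnorm_ge0.
have [d hd hgd] := hg (H *m x) (eps / K) (divr_gt0 he hK).
exists (d / K); first exact: divr_gt0.
move=> y hy.
have e1 : H *m y - H *m x = H *m (y - x) by rewrite mulmxBr.
have hn : norm2 (H *m (y - x)) <= K * norm2 (y - x).
  apply: le_trans (opnorm_ub _ _) _; apply: ler_wpM2r; first exact: norm2_ge0.
  by rewrite /K lerDl.
have hlt : norm2 (H *m y - H *m x) < d.
  rewrite e1; apply: le_lt_trans hn _; by rewrite mulrC -ltr_pdivlMr.
have := hgd _ hlt; rewrite e1 dotv_trmx => h.
apply: le_trans h _.
apply: le_trans (ler_wpM2l (ltW (divr_gt0 he hK)) hn) _.
by rewrite mulrA divfK ?lt0r_neq0.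
Qed.

Lemma bigmin_pos n (d : 'I_n -> R) : (forall i, 0 < d i) ->
  0 < \big[Num.min/1]_i d i /\ forall i, \big[Num.min/1]_i d i <= d i.
Proof.
move=> h; split.
  by elim/big_ind : _ => //= a b ha hb; rewrite lt_min ha hb.
move=> i; rewrite (bigD1 i) //= ge_min lexx //.
Qed.

Lemma grad_avg n p (n_gt0 : (0 < n)%N) (f : 'I_n -> 'cV[R]_p -> R) gf :
  (forall i, is_gradient (f i) (gf i)) ->
  is_gradient (fun y => (n%:R)^-1 * \sum_i f i y)
              (fun y => (n%:R)^-1 *: \sum_i gf i y).
Proof.
move=> hf x eps he.
have hc : forall i, exists d : R, 0 < d /\ forall y, norm2 (y - x) < d ->
   `|f i y - f i x - dotv (gf i x) (y - x)| <= eps * norm2 (y - x).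
  by move=> i; have [d hd h] := hf i x eps he; exists d.
have [d hd] := choice hc.
have [hpos hle] := bigmin_pos (fun i => (hd i).1).
exists (\big[Num.min/1]_i d i) => // y hy.
have hn : (0 : R) < n%:R by rewrite ltr0n.
rewrite dotvZl dotv_suml -mulrBr -mulrBr -sumrB -sumrB normrM.
rewrite ger0_norm ?invr_ge0 ?ler0n // ler_pdivrMl //.
apply: le_trans (ler_norm_sum _ _ _) _.
have -> : n%:R * (eps * norm2 (y - x)) = \sum_(i < n) eps * norm2 (y - x).
  by rewrite sumr_const card_ord mulr_natl.
apply: ler_sum => i _; apply: (hd i).2; exact: lt_le_trans hy (hle i).
Qed.

Lemma grad_unique p (h : 'cV[R]_p -> R) g1 g2 x :
  is_gradient h g1 -> is_gradient h g2 -> g1 x = g2 x.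
Proof.
move=> h1 h2; set w := g1 x - g2 x.
suff : norm2 w = 0 by move/norm2_eq0/eqP; rewrite subr_eq0 => /eqP.
apply: contrapT => hw.
have hp : 0 < norm2 w by rewrite lt0r norm2_ge0 andbT; apply/eqP.
set eps := norm2 w / 4.
have he : 0 < eps by rewrite divr_gt0.
have [d1 hd1 k1] := h1 x eps he. have [d2 hd2 k2] := h2 x eps he.
set d := Num.min d1 d2.
have hd : 0 < d by rewrite lt_min hd1 hd2.
set t := d / (2 * norm2 w).
have ht : 0 < t by rewrite divr_gt0 // mulr_gt0.
have hyx : x + t *: w - x = t *: w by rewrite addrC addKr.
have hnt : norm2 (t *: w) = d / 2.
  rewrite norm2Z gtr0_norm // /t; field; exact: lt0r_neq0.
have hd1' : d <= d1 by rewrite ge_min lexx.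
have hd2' : d <= d2 by rewrite ge_min lexx orbT.
have l1 : norm2 (x + t *: w - x) < d1 by rewrite hyx hnt; lra.
have l2 : norm2 (x + t *: w - x) < d2 by rewrite hyx hnt; lra.
have := k1 _ l1; have := k2 _ l2; rewrite hyx hnt !dotvZr.
have -> : dotv (g1 x) w = dotv (g2 x) w + norm2 w ^+ 2.
  by rewrite norm2_sq /w dotvBl; ring.
rewrite /eps.
set A := h (x + t *: w) - h x; set B := dotv (g2 x) w.
move=> /ler_normlP [k2a k2b] /ler_normlP [k1a k1b].
have : t * norm2 w ^+ 2 <= norm2 w / 4 * (d / 2) * 2 by lra.
rewrite /t; move=> hh.
have : d / (2 * norm2 w) * norm2 w ^+ 2 = d * norm2 w / 2.
  by field; exact: lt0r_neq0.
move=> e; rewrite e in hh.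
nra.
Qed.

Lemma grad_min p (h : 'cV[R]_p -> R) gh z :
  (forall y, h z <= h y) -> is_gradient h gh -> gh z = 0.
Proof.
move=> hm hg; set w := gh z.
apply: norm2_eq0; apply: contrapT => hw.
have hp : 0 < norm2 w by rewrite lt0r norm2_ge0 andbT; apply/eqP.
have [d hd k] := hg z (norm2 w / 2) (divr_gt0 hp (ltr0Sn _ 1)).
set t := d / (2 * norm2 w).
have ht : 0 < t by rewrite divr_gt0 // mulr_gt0.
have hyx : z - t *: w - z = (- t) *: w by rewrite addrAC subrr add0r scaleNr.
have hnt : norm2 ((- t) *: w) = d / 2.
  rewrite norm2Z normrN gtr0_norm // /t; field; exact: lt0r_neq0.
have l : norm2 (z - t *: w - z) < d by rewrite hyx hnt; lra.
have := k _ l; rewrite hyx hnt dotvZr -norm2_sq.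
have := hm (z - t *: w).
move=> h1 /ler_normlP [k1 k2].
have e : t * norm2 w ^+ 2 = d * norm2 w / 2.
  by rewrite /t; field; exact: lt0r_neq0.
nra.
Qed.

Lemma nonincr (k : R -> R) :
  (forall t, 0 <= t <= 1 -> forall eps, 0 < eps -> exists2 delta, 0 < delta &
     forall s, 0 <= s <= 1 -> `|s - t| < delta ->
       (t <= s -> k s - k t <= eps * (s - t)) /\ (s <= t -> k t - k s <= eps * (t - s))) ->
  k 1 <= k 0.
Proof.
move=> hk.
suff H : forall eps, 0 < eps -> k 1 <= k 0 + eps.
  rewrite leNgt; apply/negP => hlt.
  have h0 : 0 < (k 1 - k 0) / 2 by rewrite divr_gt0 // subr_gt0.
  have := H _ h0; lra.
move=> eps he.
set S := [set t : R | 0 <= t <= 1 /\ k t <= k 0 + eps * t].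
have S0 : S 0 by split; [rewrite lexx ler01 | rewrite mulr0 addr0].
have hs : has_sup S.
  split; first by exists 0.
  by exists 1 => t [/andP[_ h] _].
set s := sup S.
have s0 : 0 <= s by apply: (sup_upper_bound hs).
have s1 : s <= 1 by apply: ge_sup; [exists 0 | move=> t [/andP[_ h] _]].
have s01 : 0 <= s <= 1 by rewrite s0 s1.
have Ss : S s.
  split => //.
  have [d hd hkd] := hk s s01 eps he.
  have [e Se hse] := sup_adherent hd hs.
  rewrite -/s in hse.
  have es : e <= s by apply: (sup_upper_bound hs).
  case: Se => e01 hke.
  have hes : `|e - s| < d by rewrite ler0_norm ?subr_le0 //; lra.
  have [_ h2] := hkd e e01 hes.
  have := h2 es; lra.
have [lt1|ge1] := ltP s 1; last first.
  have es1 : s = 1 by apply/eqP; rewrite eq_le s1 ge1.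
  have [_ hks] := Ss; move: hks; by rewrite es1 mulr1.
exfalso.
have [d hd hkd] := hk s s01 eps he.
set s' := Num.min 1 (s + d / 2).
have hs'1 : s' <= 1 by rewrite ge_min lexx.
have hs's : s < s'.
  by rewrite lt_min lt1 /= ltrDl divr_gt0.
have hs'2 : s' <= s + d / 2 by rewrite ge_min lexx orbT.
have s'01 : 0 <= s' <= 1 by rewrite hs'1 andbT; apply: le_trans s0 (ltW hs's).
have hss : `|s' - s| < d by rewrite gtr0_norm ?subr_gt0 //; lra.
have [h1 _] := hkd s' s'01 hss.
have := h1 (ltW hs's); case: Ss => _ hks => hh.
have : S s' by split => //; lra.
move=> /(sup_upper_bound hs); rewrite -/s; lra.
Qed.

Lemma descent m (g : 'cV[R]_m -> R) gg Lg : 0 <= Lg -> is_gradient g gg ->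
  (forall x y, norm2 (gg x - gg y) <= Lg * norm2 (x - y)) ->
  forall u w, g w <= g u + dotv (gg u) (w - u) + Lg / 2 * norm2 (w - u) ^+ 2.
Proof.
move=> hL hg hlip u w.
set d := w - u; set N := norm2 d.
have hN : 0 <= N := norm2_ge0 d.
pose P (t : R) := u + t *: d.
pose k (t : R) := g (P t) - t * dotv (gg u) d - Lg / 2 * t ^+ 2 * N ^+ 2.
suff : k 1 <= k 0.
  have e1 : P 1 = w by rewrite /P scale1r /d addrC subrK.
  have e0 : P 0 = u by rewrite /P scale0r addr0.
  rewrite /k e1 e0 expr0n expr1n /=; lra.
apply: nonincr => t /andP[t0 t1] eps he.
set eps' := eps / (2 * (N + 1)).
have he' : 0 < eps' by rewrite divr_gt0 // mulr_gt0 // ltr_wpDl.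
have [d0 hd0 hgd] := hg (P t) eps' he'.
set delta := Num.min (d0 / (N + 1)) (eps / (Lg * N ^+ 2 + 1)).
have hN1 : 0 < N + 1 by rewrite ltr_wpDl.
have hLN : 0 < Lg * N ^+ 2 + 1 by rewrite ltr_wpDl // mulr_ge0 // sqr_ge0.
exists delta; first by rewrite lt_min !divr_gt0.
move=> s /andP[s0 s1] hst.
have hd1 : `|s - t| < d0 / (N + 1) by apply: lt_le_trans hst _; rewrite ge_min lexx.
have hd2 : `|s - t| < eps / (Lg * N ^+ 2 + 1).
  by apply: lt_le_trans hst _; rewrite ge_min lexx orbT.
have ePs : P s - P t = (s - t) *: d by rewrite /P opprD addrACA subrr add0r scalerBl.
have hnP : norm2 (P s - P t) = `|s - t| * N by rewrite ePs norm2Z.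
have hlt : norm2 (P s - P t) < d0.
  rewrite hnP; rewrite ltr_pdivlMr // in hd1; apply: le_lt_trans hd1.
  apply: ler_wpM2l; [exact: normr_ge0 | lra].
have := hgd _ hlt; rewrite ePs dotvZr norm2Z -/N.
set e := g (P s) - g (P t) - (s - t) * dotv (gg (P t)) d.
move=> he1.
have he2 : `|e| <= eps / 2 * `|s - t|.
  apply: le_trans he1 _.
  have hq : N / (N + 1) <= 1 by rewrite ler_pdivrMr // mul1r; lra.
  have -> : eps' * (`|s - t| * N) = eps / 2 * `|s - t| * (N / (N + 1)).
    by rewrite /eps'; field; apply: lt0r_neq0.
  rewrite -[X in _ <= X]mulr1; apply: ler_wpM2l => //.
  by rewrite mulr_ge0 ?normr_ge0 // divr_ge0 // ltW.
set c := dotv (gg (P t) - gg u) d.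
have hc : `|c| <= Lg * t * N ^+ 2.
  apply: le_trans (CSabs _ _) _.
  have : norm2 (gg (P t) - gg u) <= Lg * (t * N).
    apply: le_trans (hlip _ _) _; rewrite /P addrAC subrr add0r norm2Z ger0_norm //.
  move=> h; rewrite -/N expr2 !mulrA; apply: ler_wpM2r => //.
  by rewrite -mulrA.
have ek : k s - k t = e + (s - t) * c - Lg / 2 * (s ^+ 2 - t ^+ 2) * N ^+ 2.
  rewrite /k /e /c dotvBl; ring.
move: he2 hc; rewrite !ler_norml => /andP[ea eb] /andP[ca cb].
have hdelta : `|s - t| * (Lg * N ^+ 2 + 1) < eps by rewrite -ltr_pdivlMr.
split => hts.
  rewrite ger0_norm ?subr_ge0 // in eb ea hdelta.
  rewrite ek.
  have : (s - t) * c <= (s - t) * (Lg * t * N ^+ 2) by apply: ler_wpM2l; rewrite ?subr_ge0.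
  have : 0 <= Lg * N ^+ 2 * (s - t) ^+ 2 by rewrite mulr_ge0 ?sqr_ge0 // mulr_ge0 // sqr_ge0.
  nra.
rewrite ler0_norm ?subr_le0 // opprB in eb ea hdelta.
have ek' : k t - k s = - (e + (s - t) * c - Lg / 2 * (s ^+ 2 - t ^+ 2) * N ^+ 2) by rewrite -ek; ring.
rewrite ek'.
have : (t - s) * c <= (t - s) * (Lg * t * N ^+ 2) by apply: ler_wpM2l; rewrite ?subr_ge0.
have h3 : 0 <= Lg * N ^+ 2 by rewrite mulr_ge0 // sqr_ge0.
have : Lg * N ^+ 2 * (t - s) <= eps.
  apply: le_trans (ltW hdelta); rewrite mulrC ler_wpM2l ?subr_ge0 //; lra.
have : 0 <= t - s by rewrite subr_ge0.
nra.
Qed.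

Lemma cocoer_gen m (phi : 'cV[R]_m -> R) dphi L' : 0 <= L' ->
  (forall u w, phi u + dotv (dphi u) (w - u) <= phi w) ->
  (forall u w, phi w <= phi u + dotv (dphi u) (w - u) + L' / 2 * norm2 (w - u) ^+ 2) ->
  forall u v, norm2 (dphi u - dphi v) ^+ 2 <= L' * dotv (dphi u - dphi v) (u - v).
Proof.
move=> hL hc hd.
have key : forall s, 0 < s -> forall u v,
    phi u + dotv (dphi u) (v - u) <= phi v - s * norm2 (dphi v - dphi u) ^+ 2
                                       + L' / 2 * s ^+ 2 * norm2 (dphi v - dphi u) ^+ 2.
  move=> s hs u v; set D := dphi v - dphi u.
  set w := v - s *: D.
  have h1 := hc u w. have h2 := hd v w.
  have ew : w - v = - (s *: D) by rewrite /w addrAC subrr add0r.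
  have ewu : w - u = (v - u) - s *: D by rewrite /w addrAC.
  rewrite ewu dotvBr dotvZr in h1.
  rewrite ew norm2N norm2Z dotvNr dotvZr in h2.
  have : dotv (dphi v) D - dotv (dphi u) D = norm2 D ^+ 2 by rewrite norm2_sq /D dotvBl.
  rewrite (ger0_norm (ltW hs)) exprMn in h2.
  move=> e; nra.
move=> u v.
have eN : norm2 (dphi v - dphi u) = norm2 (dphi u - dphi v) by rewrite norm2B.
have S : forall s, 0 < s -> (2 * s - L' * s ^+ 2) * norm2 (dphi u - dphi v) ^+ 2
                        <= dotv (dphi u - dphi v) (u - v).
  move=> s hs; have k1 := key s hs u v; have k2 := key s hs v u.
  rewrite eN in k1.
  have : dotv (dphi u - dphi v) (u - v) = - (dotv (dphi u) (v - u) + dotv (dphi v) (u - v)).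
    rewrite dotvBl !dotvBr; ring.
  move=> e; rewrite e; nra.
have [hL0|hLp] := eqVneq L' 0.
  rewrite hL0 mul0r.
  set X := norm2 (dphi u - dphi v) ^+ 2.
  have hX : 0 <= X by rewrite sqr_ge0.
  set Y := dotv (dphi u - dphi v) (u - v).
  rewrite leNgt; apply/negP => hX0.
  have := S ((`|Y| + 1) / X) (divr_gt0 (ltr_wpDl (normr_ge0 _) ltr01) hX0).
  rewrite hL0 mul0r subr0 -/X -/Y.
  have e : 2 * ((`|Y| + 1) / X) * X = 2 * (`|Y| + 1) by field; exact: lt0r_neq0.
  rewrite e; have := ler_norm Y; have := normr_ge0 Y; lra.
have hLp' : 0 < L' by rewrite lt0r hLp hL.
have hi : 0 < L'^-1 by rewrite invr_gt0.
have := S (L'^-1) hi.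
have -> : 2 * L'^-1 - L' * L'^-1 ^+ 2 = L'^-1 by field.
move=> h; have := ler_wpM2l (ltW hLp') h; by rewrite mulrA mulfV // mul1r.
Qed.

End Grad.
Section Spec.
Variable R : realType.

Lemma sc_mono m (g : 'cV[R]_m -> R) gg alpha : strongly_convex g gg alpha ->
  forall u v, alpha * norm2 (u - v) ^+ 2 <= dotv (gg u - gg v) (u - v).
Proof.
move=> hs u v.
have h1 := hs u v; have h2 := hs v u.
rewrite (norm2B v u) in h1.
have : dotv (v - u) (gg u) = - dotv (gg u) (u - v).
  by rewrite dotvC -dotvNr opprB.
have : dotv (u - v) (gg v) = dotv (gg v) (u - v) by rewrite dotvC.
rewrite dotvBl; lra.
Qed.

Lemma cocoer_g m (g : 'cV[R]_m -> R) gg alpha Lg : 0 < alpha -> alpha <= Lg ->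
  strongly_convex g gg alpha -> L_smooth g gg Lg ->
  forall u v, norm2 (gg u - gg v) ^+ 2 + alpha * Lg * norm2 (u - v) ^+ 2
              <= (Lg + alpha) * dotv (gg u - gg v) (u - v).
Proof.
move=> ha haL hs [hg hl] u v.
have hL : 0 <= Lg by apply: le_trans haL; exact: ltW.
have hdes := descent hL hg hl.
pose phi (w : 'cV[R]_m) := g w - alpha / 2 * norm2 w ^+ 2.
pose dphi (w : 'cV[R]_m) := gg w - alpha *: w.
have hkey : forall a b : 'cV[R]_m, dotv (dphi a) (b - a) =
    dotv (gg a) (b - a) - alpha / 2 * (norm2 b ^+ 2 - norm2 a ^+ 2 - norm2 (b - a) ^+ 2).
  move=> a b; rewrite /dphi dotvBl dotvZl dotv_sq_expand !dotvBr (dotvC b a) !norm2_sq.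
  by field.
have hc : forall a0 b0 : 'cV[R]_m, phi a0 + dotv (dphi a0) (b0 - a0) <= phi b0.
  move=> a0 b0; rewrite hkey /phi; have := hs a0 b0; rewrite (dotvC (b0 - a0)); lra.
have hd : forall a0 b0 : 'cV[R]_m, phi b0 <= phi a0 + dotv (dphi a0) (b0 - a0) + (Lg - alpha) / 2 * norm2 (b0 - a0) ^+ 2.
  move=> a0 b0; rewrite hkey /phi; have := hdes a0 b0; lra.
have hL' : 0 <= Lg - alpha by rewrite subr_ge0.
have := cocoer_gen hL' hc hd u v.
have e : dphi u - dphi v = (gg u - gg v) - alpha *: (u - v).
  by apply/matrixP => i j; rewrite /dphi !mxE; ring.
rewrite e (dotv_sq_expand (gg u - gg v)) norm2Z dotvZr.
rewrite (dotvBl (gg u - gg v) (alpha *: (u - v)) (u - v)) dotvZl -(norm2_sq (u - v)) exprMn.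
rewrite (ger0_norm (ltW ha)).
set X := dotv (gg u - gg v) (u - v).
set Y := norm2 (u - v) ^+ 2. set G := norm2 (gg u - gg v) ^+ 2.
move=> h.
have : G + alpha * Lg * Y - (Lg + alpha) * X =
       (G - 2 * (alpha * X) + alpha ^+ 2 * Y) - (Lg - alpha) * (X - alpha * Y) by ring.
lra.
Qed.

Lemma contraction m p (gg : 'cV[R]_m -> 'cV[R]_m) (H : 'M[R]_(m, p))
    alpha Lg cH CH mu y z :
  0 < alpha -> alpha <= Lg -> 0 < mu -> 0 <= cH ->
  (forall u v, norm2 (gg u - gg v) ^+ 2 + alpha * Lg * norm2 (u - v) ^+ 2
              <= (Lg + alpha) * dotv (gg u - gg v) (u - v)) ->
  CH * opnorm H ^+ 2 = 1 -> mu <= 2 * CH / (Lg + alpha) ->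
  cH * norm2 (y - z) ^+ 2 <= norm2 (H *m y - H *m z) ^+ 2 ->
  H^T *m gg (H *m z) = 0 ->
  norm2 (y - mu *: (H^T *m gg (H *m y)) - z) ^+ 2
    <= (1 - 2 * Lg * alpha * cH / (Lg + alpha) * mu) * norm2 (y - z) ^+ 2.
Proof.
move=> ha haL hmu hcH hcc hCH hmuCH hH h0.
set G := gg (H *m y) - gg (H *m z).
have eG : H^T *m gg (H *m y) = H^T *m G by rewrite /G mulmxBr h0 subr0.
have ey : y - mu *: (H^T *m gg (H *m y)) - z = (y - z) - mu *: (H^T *m G).
  by rewrite eG addrAC.
rewrite ey dotv_sq_expand dotvZr norm2Z (ger0_norm (ltW hmu)) exprMn.
rewrite dotvC dotv_trmx mulmxBr.
have hT := trmx_ub H G.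
have hTs : norm2 (H^T *m G) ^+ 2 <= opnorm H ^+ 2 * norm2 G ^+ 2.
  rewrite -exprMn ler_pXn2r ?nnegrE ?mulr_ge0 ?norm2_ge0 ?opnorm_ge0 //.
have hcc' := hcc (H *m y) (H *m z); rewrite -/G in hcc'.
set P := dotv G (H *m y - H *m z) in hcc' *.
set d2 := norm2 (y - z) ^+ 2 in hH *.
set h2 := norm2 (H *m y - H *m z) ^+ 2 in hH hcc' *.
set g2 := norm2 G ^+ 2 in hTs hcc' *.
set o2 := opnorm H ^+ 2 in hTs hCH.
set Q := norm2 (H^T *m G) ^+ 2 in hTs *.
have hs : 0 < Lg + alpha by lra.
have hmu2 : mu * o2 <= 2 / (Lg + alpha).
  have ho : 0 <= o2 by rewrite sqr_ge0.
  have e : 2 * CH / (Lg + alpha) * o2 = 2 / (Lg + alpha) * (CH * o2) by ring.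
  by have := ler_wpM2r ho hmuCH; rewrite e hCH mulr1.
have hg2 : 0 <= g2 by rewrite sqr_ge0.
have hh2 : 0 <= h2 by rewrite sqr_ge0.
have hmuQ : mu * Q <= 2 / (Lg + alpha) * g2.
  apply: le_trans (ler_wpM2l (ltW hmu) hTs) _.
  have := ler_wpM2r hg2 hmu2; lra.
have hC : 2 * Lg * alpha * cH / (Lg + alpha) * d2 <= 2 * Lg * alpha / (Lg + alpha) * h2.
  have hk : 0 <= 2 * Lg * alpha / (Lg + alpha).
    by rewrite divr_ge0 ?mulr_ge0 //; lra.
  have := ler_wpM2l hk hH; lra.
have hkey : 2 * Lg * alpha / (Lg + alpha) * h2 + 2 / (Lg + alpha) * g2 <= 2 * P.
  have e : 2 * Lg * alpha / (Lg + alpha) * h2 + 2 / (Lg + alpha) * g2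
         = 2 / (Lg + alpha) * (g2 + alpha * Lg * h2) by field; lra.
  rewrite e; have h2s : 0 <= 2 / (Lg + alpha) by rewrite divr_ge0 // ltW.
  have := ler_wpM2l h2s hcc'.
  have -> : 2 / (Lg + alpha) * ((Lg + alpha) * P) = 2 * P by field; lra.
  done.
have : mu * (2 * Lg * alpha * cH / (Lg + alpha) * d2) + mu * (mu * Q) <= mu * (2 * P).
  rewrite -mulrDr ler_pM2l //; lra.
set C := 2 * Lg * alpha * cH / (Lg + alpha).
move=> hfin.
have : mu ^+ 2 * Q = mu * (mu * Q) by rewrite expr2 mulrA.
have : (1 - C * mu) * d2 = d2 - mu * (C * d2) by ring.
lra.
Qed.

End Spec.
Section Cons.
Variable R : realType.

Lemma app_const n p (W : 'M[R]_n) (c : 'cV[R]_p) : doubly_stochastic W ->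
  forall i, app W (fun _ => c) i = c.
Proof.
move=> [_ [hr _]] i; rewrite /app -scaler_suml hr scale1r //.
Qed.

Lemma avg_app n p (W : 'M[R]_n) (z : 'I_n -> 'cV[R]_p) : doubly_stochastic W ->
  avg (app W z) = avg z.
Proof.
move=> [_ [_ hc]]; rewrite /avg /app; congr (_ *: _).
rewrite exchange_big /=; apply: eq_bigr => j _; by rewrite -scaler_suml hc scale1r.
Qed.

Lemma app_pow n p (W : 'M[R]_n) (z : 'I_n -> 'cV[R]_p) k :
  app (W ^+ k.+1) z = app W (app (W ^+ k) z).
Proof. by rewrite exprS -app_mul. Qed.

Lemma avg_apppow n p (W : 'M[R]_n) (z : 'I_n -> 'cV[R]_p) k : doubly_stochastic W ->
  avg (app (W ^+ k) z) = avg z.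
Proof.
move=> hW; elim: k => [|k IH].
  congr avg; apply: funext => i; rewrite /app expr0 (bigD1 i) //= big1.
    by rewrite mxE eqxx scale1r addr0.
  by move=> j hj; rewrite mxE eq_sym (negbTE hj) scale0r.
by rewrite app_pow avg_app.
Qed.

Lemma avg_const n p (c : 'cV[R]_p) : (0 < n)%N -> avg (fun _ : 'I_n => c) = c.
Proof.
move=> hn; rewrite /avg sumr_const card_ord -scaler_nat scalerA mulVf ?scale1r //.
by rewrite pnatr_eq0 -lt0n.
Qed.

Lemma app_P n p (z : 'I_n -> 'cV[R]_p) i :
  app ((n%:R)^-1 *: const_mx 1) z i = avg z.
Proof.
by rewrite /app /avg scaler_sumr; apply: eq_bigr => j _; rewrite !mxE mulr1.
Qed.

Lemma cons_bound n p (W : 'M[R]_n) (z : 'I_n -> 'cV[R]_p) (c : 'cV[R]_p) J :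
  (0 < n)%N -> doubly_stochastic W -> (0 < J)%N ->
  snorm (fun i => avg (app (W ^+ J) z) - app (W ^+ J) z i)
    <= opnorm (W - (n%:R)^-1 *: const_mx 1) ^+ J * snorm (fun i => z i - c).
Proof.
move=> hn hW hJ.
set M := W - (n%:R)^-1 *: const_mx 1.
set b := opnorm M.
have hb : 0 <= b by exact: opnorm_ge0.
have hMc : forall (c0 : 'cV[R]_p) i, app M (fun _ => c0) i = 0.
  by move=> c0 i; rewrite app_sub app_const // app_P avg_const // subrr.
have hM : forall (v : 'I_n -> 'cV[R]_p) i, app M v i = app W v i - avg v.
  by move=> v i; rewrite app_sub app_P.
pose e j := fun i => app (W ^+ j) z i - avg z.
have H : forall j, snorm (e j.+1) <= b ^+ j.+1 * snorm (fun i => z i - c).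
  elim => [|j IH].
    have -> : e 1%N = app M (fun i => z i - c).
      apply: funext => i; rewrite app_lin hMc subr0 hM /e expr1 //.
    by rewrite expr1; apply: app_norm.
  have -> : e j.+2 = app M (e j.+1).
    apply: funext => i; rewrite /e app_lin hMc subr0 hM avg_apppow //.
    by rewrite app_pow.
  apply: le_trans (app_norm _ _) _; rewrite exprS -mulrA; exact: ler_wpM2l.
rewrite avg_apppow //.
have -> : (fun i => avg z - app (W ^+ J) z i) = (fun i => - e J i).
  by apply: funext => i; rewrite /e opprB.
rewrite snormN; case: J hJ => // J _; exact: H.
Qed.

End Cons.
Section Num.
Variable R : realType.

Lemma numeric (A B : nat -> R) (q b t mu L D Rr gam : R) :
  (forall k, 0 <= A k) -> (forall k, 0 <= B k) ->
  0 <= q -> q < 1 -> 0 <= b -> b < 1 -> 0 < mu -> 0 < L -> 0 <= D -> t = mu * L ->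
  gam * t = 1 - q -> gam <= 1 -> 0 < gam ->
  A 0%N <= Rr -> B 0%N <= gam * Rr -> mu * D * b <= Rr * (gam - (t + gam * (1 + t)) * b) ->
  (forall k, A k.+1 <= q * A k + t * B k) ->
  (forall k, B k.+1 <= b * (B k + mu * (L * (B k + A k) + D))) ->
  forall k, A k.+1 <= q ^+ k * (A 0%N + t * B 0%N)
                      + t * b / (1 - b) * (mu * (2 * L * Rr + D) / (1 - q) + B 0%N)
     /\ B k <= b ^+ k * B 0%N + mu * b * (2 * L * Rr + D) / (1 - b).
Proof.
move=> hA hB q0 q1 b0 b1 hmu hL hD et hgt hg1 hg0 hA0 hB0 hR SA SB.
have ht : 0 < t by rewrite et mulr_gt0.
have hR0 : 0 <= Rr by apply: le_trans (hA 0%N) hA0.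
have inv : forall k, A k <= Rr /\ B k <= gam * Rr.
  elim => [|k [iA iB]]; first by [].
  have hAk := hA k; have hBk := hB k.
  split.
    apply: le_trans (SA k) _.
    have h1 : q * A k <= q * Rr by apply: ler_wpM2l.
    have h2 : t * B k <= t * (gam * Rr) by apply: ler_wpM2l => //; apply: ltW.
    have e : t * (gam * Rr) = (1 - q) * Rr by rewrite mulrA (mulrC t) hgt.
    lra.
  apply: le_trans (SB k) _.
  have h1 : mu * L * B k <= mu * L * (gam * Rr) by apply: ler_wpM2l => //; rewrite ltW // mulr_gt0.
  have h2 : mu * L * A k <= mu * L * Rr by apply: ler_wpM2l => //; rewrite ltW // mulr_gt0.
  have hX : B k + mu * (L * (B k + A k) + D) <= (1 + t) * (gam * Rr) + t * Rr + mu * D.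
    rewrite et; lra.
  have := ler_wpM2l b0 hX.
  have : b * ((1 + t) * (gam * Rr) + t * Rr + mu * D) <= gam * Rr.
    lra.
  lra.
set E := mu * b * (2 * L * Rr + D) / (1 - b).
have hb1 : 0 < 1 - b by rewrite subr_gt0.
have hq1 : 0 < 1 - q by rewrite subr_gt0.
have h2L : 0 <= 2 * L * Rr + D by rewrite addr_ge0 // mulr_ge0 // mulr_ge0 // ltW.
have hE0 : 0 <= E by rewrite /E divr_ge0 ?mulr_ge0 // ?ltW.
have eE : (1 - b) * E = mu * b * (2 * L * Rr + D) by rewrite /E; field; apply: lt0r_neq0.
have SB' : forall k, B k.+1 <= b * B k + (1 - b) * E.
  move=> k; apply: le_trans (SB k) _; rewrite eE.
  have [iA iB] := inv k.
  have : B k + A k <= 2 * Rr by nra.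
  move=> h; have : mu * L * (B k + A k) <= mu * L * (2 * Rr).
    by apply: ler_wpM2l => //; rewrite ltW // mulr_gt0.
  move=> h2; have hX : B k + mu * (L * (B k + A k) + D) <= B k + mu * (2 * L * Rr + D) by lra.
  have := ler_wpM2l b0 hX; lra.
have Bb : forall k, B k <= b ^+ k * B 0%N + E.
  elim => [|k IH]; first by rewrite expr0 mul1r; lra.
  apply: le_trans (SB' k) _; have := ler_wpM2l b0 IH; rewrite exprS; lra.
set u := (1 - b)^-1; set v := (1 - q)^-1.
have hu : u * (1 - b) = 1 by rewrite /u mulVf // lt0r_neq0.
have hv : v * (1 - q) = 1 by rewrite /v mulVf // lt0r_neq0.
have hu0 : 0 <= u by rewrite /u invr_ge0 ltW.
have hv0 : 0 <= v by rewrite /v invr_ge0 ltW.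
have Ab : forall k, A k.+1 <= q ^+ k.+1 * A 0%N + t * B 0%N * q ^+ k
           + t * B 0%N * (b - b ^+ k.+1) * u + t * E * (1 - q ^+ k.+1) * v.
  elim => [|k IH].
    rewrite !expr1 expr0.
    apply: le_trans (SA 0%N) _.
    have : 0 <= t * E by rewrite mulr_ge0 // ltW.
    have : t * E * (v * (1 - q)) = t * E by rewrite hv mulr1.
    lra.
  set X := q ^+ k.+1; set Y := b ^+ k.+1.
  have eX : q ^+ k.+2 = q * X by rewrite exprS.
  have eY : b ^+ k.+2 = b * Y by rewrite exprS.
  have eX' : q * q ^+ k = X by rewrite -exprS.
  have hY : Y <= b by rewrite /Y exprS ler_piMr // exprn_ile1 // ltW.
  have hBk := Bb k.+1; rewrite -/Y in hBk.
  have h1 := ler_wpM2l q0 IH.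
  have h2 := ler_wpM2l (ltW ht) hBk.
  have F1 : 0 <= (1 - q) * (t * B 0%N * (b - Y) * u).
    have : 0 <= 1 - q by lra.
    have : 0 <= b - Y by lra.
    move=> h3 h4; rewrite !mulr_ge0 // ltW //.
  have F2 : t * B 0%N * Y * (u * (1 - b)) = t * B 0%N * Y by rewrite hu mulr1.
  have F3 : t * E * (v * (1 - q)) = t * E by rewrite hv mulr1.
  apply: le_trans (SA k.+1) _.
  rewrite -/X -/Y in h1.
  have e1 : q * (t * B 0%N * q ^+ k) = t * B 0%N * X by rewrite -eX'; ring.
  have e2 : q ^+ k.+2 * A 0%N = q * (X * A 0%N) by rewrite eX; ring.
  have e3 : t * E * (1 - q ^+ k.+2) * v = q * (t * E * (1 - X) * v) + t * E * (v * (1 - q)).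
    by rewrite eX; ring.
  have e4 : t * B 0%N * (b - b ^+ k.+2) * u = t * B 0%N * (b - Y) * u + t * B 0%N * Y * (u * (1 - b)).
    by rewrite eY; ring.
  rewrite e2 e3 e4.
  lra.
move=> k; split; last exact: Bb.
apply: le_trans (Ab k) _.
have hqk : 0 <= q ^+ k by rewrite exprn_ge0.
have hqk1 : q ^+ k.+1 <= q ^+ k by rewrite exprS ler_piMl // ltW.
have hbk : 0 <= b ^+ k.+1 by rewrite exprn_ge0.
have hqk2 : 0 <= q ^+ k.+1 by rewrite exprn_ge0.
have G1 : q ^+ k.+1 * A 0%N <= q ^+ k * A 0%N by apply: ler_wpM2r.
have G2 : t * B 0%N * (b - b ^+ k.+1) * u <= t * B 0%N * b * u.
  have : 0 <= t * B 0%N * b ^+ k.+1 * u by rewrite !mulr_ge0 // ltW.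
  lra.
have G3 : t * E * (1 - q ^+ k.+1) * v <= t * E * v.
  have : 0 <= t * E * q ^+ k.+1 * v by rewrite !mulr_ge0 // ltW.
  lra.
have e : t * b / (1 - b) * (mu * (2 * L * Rr + D) / (1 - q) + B 0%N)
       = t * E * v + t * B 0%N * b * u.
  by rewrite /E /u /v; field; rewrite !lt0r_neq0.
rewrite e; lra.
Qed.

End Num.
Section Consts.
Variable R : realType.
Lemma consts (alpha Lg cH CH mu L beta : R) (J : nat) :
  0 < alpha -> alpha <= Lg -> 0 < cH -> 0 < mu -> 0 < L -> 0 < CH ->
  mu <= 2 * CH / (Lg + alpha) -> cH * CH <= 1 -> alpha * cH <= L ->
  0 <= beta -> beta < 1 ->
  let C2 := 2 * Lg * alpha * cH / (Lg + alpha) in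
  mu * (L * beta ^+ J) * (C2 + L * (1 + Num.sqrt 2)) <= C2 * (1 - beta ^+ J) ->
  let q := Num.sqrt (1 - C2 * mu) in
  let gamma := (1 - q) / (mu * L) in
  [/\ (0 < J)%N, 0 <= q, q < 1, 0 <= beta ^+ J & beta ^+ J < 1] /\
   [/\ gamma * (mu * L) = 1 - q, 0 < gamma, gamma <= 1 &
       0 < gamma - (mu * L + gamma * (1 + mu * L)) * beta ^+ J].
Proof.
move=> ha haL hcH hmu hL hCHp hmuCH hcHCH haL2 hbeta0 hbeta C2 hmucond q gamma.
have hLg0 : 0 < Lg by lra.
have hs : 0 < Lg + alpha by lra.
have hC2 : 0 < C2.
  apply: divr_gt0; last lra.
  by apply: mulr_gt0 => //; apply: mulr_gt0 => //; apply: mulr_gt0.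
set c := C2 * mu.
have hc0 : 0 < c by rewrite /c mulr_gt0.
have hmus : mu * (Lg + alpha) <= 2 * CH by rewrite -ler_pdivlMr.
have hcs : c * (Lg + alpha) = 2 * Lg * alpha * cH * mu by rewrite /c /C2; field; lra.
have hc1 : c <= 1.
  have h1 : c * (Lg + alpha) * (Lg + alpha) <= 4 * Lg * alpha.
    rewrite hcs.
    have h2 : 0 <= 2 * Lg * alpha * cH by rewrite !mulr_ge0 // ltW.
    have := ler_wpM2l h2 hmus.
    have : 0 <= 4 * Lg * alpha by rewrite !mulr_ge0 // ltW.
    have : 4 * Lg * alpha * (cH * CH) <= 4 * Lg * alpha * 1 by apply: ler_wpM2l => //; rewrite !mulr_ge0 // ltW.
    lra.
  have h3 : 4 * Lg * alpha <= (Lg + alpha) * (Lg + alpha) by nra.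
  have h4 : c * ((Lg + alpha) * (Lg + alpha)) <= 1 * ((Lg + alpha) * (Lg + alpha)) by lra.
  by rewrite ler_pM2r ?mulr_gt0 in h4.
have hq2 : q ^+ 2 = 1 - c by rewrite /q sqr_sqrtr // subr_ge0.
have hq0 : 0 <= q by exact: sqrtr_ge0.
have hq1 : q < 1 by nra.
have hqc : q <= 1 - c / 2.
  have : 0 <= 1 - c / 2 by lra.
  nra.
have hgam1 : 1 - q <= mu * L.
  set s' := mu * (alpha * cH).
  have hs'L : s' <= mu * L by rewrite /s' ler_wpM2l // ltW.
  have [hs1|hs1] := lerP 1 s'; first by lra.
  suff : 1 - s' <= q by lra.
  have hE : (s' ^+ 2 - 2 * s' + c) * (Lg + alpha)
          = mu * alpha ^+ 2 * cH * (cH * (mu * (Lg + alpha)) - 2).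
    by rewrite /s' /c /C2; field; lra.
  have h1 : cH * (mu * (Lg + alpha)) <= 2.
    have := ler_wpM2l (ltW hcH) hmus; lra.
  have h2 : mu * alpha ^+ 2 * cH * (cH * (mu * (Lg + alpha)) - 2) <= 0.
    rewrite pmulr_rle0 ?subr_le0 // !mulr_gt0 // exprn_gt0 //.
  have h3 : s' ^+ 2 - 2 * s' + c <= 0.
    by move: h2; rewrite -hE pmulr_lle0.
  nra.
have hr2 : 1 < Num.sqrt (2 : R).
  have : Num.sqrt 1 < Num.sqrt (2 : R) by rewrite ltr_sqrt // ltr1n.
  by rewrite sqrtr1.
have hJ : (0 < J)%N.
  rewrite lt0n; apply/negP => /eqP hJ0; move: hmucond; rewrite hJ0 => hm.
  rewrite expr0 subrr mulr0 mulr1 in hm.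
  have h1 : 0 < 1 + Num.sqrt (2 : R) by lra.
  have h2 : 0 < L * (1 + Num.sqrt 2) by rewrite mulr_gt0.
  have h3 : 0 < C2 + L * (1 + Num.sqrt 2) by rewrite addr_gt0.
  have : 0 < mu * L * (C2 + L * (1 + Num.sqrt 2)) by rewrite !mulr_gt0.
  lra.
set b := beta ^+ J.
have hb0 : 0 <= b by rewrite /b exprn_ge0.
have hb1 : b < 1 by rewrite /b exprn_ilt1 // -lt0n.
set t := mu * L.
have ht : 0 < t by rewrite /t mulr_gt0.
have hgt : gamma * t = 1 - q by rewrite /gamma -/t divfK // lt0r_neq0.
have hgam0 : 0 < gamma by rewrite /gamma divr_gt0 // subr_gt0.
have hgam1' : gamma <= 1.
  by rewrite /gamma -/t ler_pdivrMr // mul1r.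
set den := gamma - (t + gamma * (1 + t)) * b.
have hden : 0 < den.
  have hdt : den * t = (1 - q) * (1 - b - b * t) - t ^+ 2 * b.
    by rewrite /den -hgt; ring.
  have ha1 : c * (1 - b - b * t) >= t ^+ 2 * b * (1 + Num.sqrt 2).
    have := ler_wpM2l (ltW hmu) hmucond; rewrite -/b /c /t; lra.
  have ha2 : 0 <= 1 - b - b * t.
    have : 0 <= t ^+ 2 * b * (1 + Num.sqrt 2) by rewrite !mulr_ge0 // ?exprn_ge0 ?ltW //; lra.
    move=> h; have : 0 <= c * (1 - b - b * t) by lra.
    by rewrite pmulr_rge0.
  have ha3 : c / 2 * (1 - b - b * t) <= (1 - q) * (1 - b - b * t).
    by apply: ler_wpM2r => //; lra.
  have ha4 : t ^+ 2 * b <= t ^+ 2 * b * (1 + Num.sqrt 2) / 2.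
    have : 0 <= t ^+ 2 * b by rewrite mulr_ge0 // exprn_ge0 // ltW.
    move=> h; have := ler_wpM2l h (ltW hr2); lra.
  suff : 0 < den * t by rewrite pmulr_lgt0.
  rewrite hdt.
  have [hb00|hbp] := eqVneq b 0.
    rewrite hb00; lra.
  have hbp' : 0 < b by rewrite lt0r hbp hb0.
  have : 0 < t ^+ 2 * b * (Num.sqrt 2 - 1) by rewrite !mulr_gt0 // ?exprn_gt0 // subr_gt0.
  lra.
by split; split.
Qed.
End Consts.

Unset Implicit Arguments.

Theorem theorem2p11 (R : realType) (n p m : nat) (n_gt0 : (0 < n)%N)
  (W : 'M[R]_n)
  (f : 'I_n -> 'cV[R]_p -> R) (gf : 'I_n -> 'cV[R]_p -> 'cV[R]_p) (Li : 'I_n -> R)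
  (g : 'cV[R]_m -> R) (gg : 'cV[R]_m -> 'cV[R]_m) (alpha Lg : R)
  (H : 'M[R]_(m, p)) (proj : 'cV[R]_p -> 'cV[R]_p) (cH : R)
  (J : nat) (mu : R) (x : nat -> 'I_n -> 'cV[R]_p) :
  doubly_stochastic W -> strongly_connected_selfloops W ->
  let beta := opnorm (W - (n%:R)^-1 *: const_mx 1) in
  beta < 1 ->
  (forall i, 0 < Li i) -> (forall i, L_smooth (f i) (gf i) (Li i)) ->
  let F := fun y => (n%:R)^-1 * \sum_(i < n) f i y in
  0 < alpha -> strongly_convex g gg alpha -> L_smooth g gg Lg ->
  (forall y, F y = g (H *m y)) ->
  let Xs := minimizers F in
  Xs !=set0 ->
  (forall y, is_proj Xs y (proj y)) ->
  0 < cH ->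
  (forall y, cH * norm2 (y - proj y) ^+ 2 <= norm2 (H *m y - H *m proj y) ^+ 2) ->
  let Dset := [set Num.sqrt (\sum_(j < n) norm2 (gf j y) ^+ 2) | y in Xs] in
  has_ubound Dset ->
  let D := sup Dset in
  let L := \big[Num.max/0]_(i < n) Li i in
  let C2 := 2 * Lg * alpha * cH / (Lg + alpha) in
  let CH := (opnorm H ^+ 2)^-1 in
  0 < mu -> mu <= 2 * CH / (Lg + alpha) ->
  mu * (L * beta ^+ J) * (C2 + L * (1 + Num.sqrt 2)) <= C2 * (1 - beta ^+ J) ->
  near_dgd_plus W (fun _ => J) mu gf x ->
  let xbar := fun k => avg (x k) in
  let A0 := snorm (fun _ : 'I_n => xbar 0%N - proj (xbar 0%N)) in
  let B0 := snorm (fun i => xbar 0%N - x 0%N i) in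
  let q := Num.sqrt (1 - C2 * mu) in
  let gamma := (1 - q) / (mu * L) in
  let Rr := Num.max A0 (Num.max (B0 / gamma)
              (mu * D * beta ^+ J / (gamma - (mu * L + gamma * (1 + mu * L)) * beta ^+ J))) in
  forall k : nat,
    snorm (fun _ : 'I_n => xbar k.+1 - proj (xbar k.+1))
      <= q ^+ k * (A0 + mu * L * B0)
         + mu * L * beta ^+ J / (1 - beta ^+ J)
           * (mu * (2 * L * Rr + D) / (1 - q) + B0)
    /\ snorm (fun i => xbar k - x k i)
      <= (beta ^+ J) ^+ k * B0 + mu * beta ^+ J * (2 * L * Rr + D) / (1 - beta ^+ J).
Proof.
move=> hds hscW beta hbeta hLi hsm F ha hscg hLg hFg Xs hXs hproj hcH hHoff Dset hDub D L C2 CH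
  hmu hmuCH hmucond hdgd xbar A0 B0 q gamma Rr.
have hLiL : forall i, Li i <= L.
  by move=> i; rewrite /L (bigD1 i) //= le_max lexx.
pose i0 : 'I_n := Ordinal n_gt0.
have hL : 0 < L by exact: lt_le_trans (hLi i0) (hLiL i0).
have hgf : forall i, is_gradient (f i) (gf i) by move=> i; case: (hsm i).
have hgfL : forall i y z, norm2 (gf i y - gf i z) <= L * norm2 (y - z).
  move=> i y z; case: (hsm i) => _ h; apply: le_trans (h y z) _.
  by apply: ler_wpM2r; [exact: norm2_ge0 | exact: hLiL].
have [hgg hggL] := hLg.
have hn : (0 : R) < n%:R by rewrite ltr0n.
have eF : F = (fun y => g (H *m y)) by apply: funext => y; exact: hFg.
have hgradF : forall y, (n%:R)^-1 *: \sum_i gf i y = H^T *m gg (H *m y).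
  move=> y.
  have h1 := grad_avg n_gt0 hgf.
  have h2 := grad_comp H hgg.
  rewrite -/F eF in h1.
  exact: (grad_unique y h1 h2).
have hzero : forall z, Xs z -> H^T *m gg (H *m z) = 0.
  move=> z hz.
  have hmin : forall y, (fun y => g (H *m y)) z <= (fun y => g (H *m y)) y.
    by move=> y /=; rewrite -!hFg; exact: hz.
  exact: (grad_min hmin (grad_comp H hgg)).
have hCH0 : CH != 0.
  apply/eqP => e; move: hmuCH; rewrite e mulr0 mul0r; lra.
have ho : 0 < opnorm H.
  rewrite lt0r opnorm_ge0 andbT; apply: contra hCH0 => /eqP e.
  by rewrite /CH e expr0n /= invr0.
have hCHo : CH * opnorm H ^+ 2 = 1 by rewrite /CH mulVf // expf_neq0 // lt0r_neq0.
have hCHp : 0 < CH by rewrite /CH invr_gt0 exprn_gt0.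
have [x0 hx0] := opnorm_gt0_ex ho.
set u0 := H *m x0 in hx0.
have haL : alpha <= Lg.
  have h1 := sc_mono hscg u0 0.
  have h2 := CS (gg u0 - gg 0) (u0 - 0).
  have h3 := hggL u0 0.
  rewrite subr0 in h1 h2 h3.
  have h4 : norm2 (gg u0 - gg 0) * norm2 u0 <= Lg * norm2 u0 * norm2 u0.
    by apply: ler_wpM2r => //; exact: norm2_ge0.
  have : alpha * norm2 u0 ^+ 2 <= Lg * norm2 u0 ^+ 2 by rewrite expr2; lra.
  by rewrite ler_pM2r // exprn_gt0.
have hcc := cocoer_g ha haL hscg hLg.
have hs : 0 < Lg + alpha by lra.
have [y1 hy1] : exists y1, 0 < norm2 (y1 - proj y1).
  apply: contrapT => hno.
  have hfix : forall y, Xs y.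
    move=> y; have e : norm2 (y - proj y) = 0.
      apply/eqP; rewrite eq_le norm2_ge0 andbT leNgt; apply/negP => hp; apply: hno; by exists y.
    have := norm2_eq0 e; move/eqP; rewrite subr_eq0 => /eqP ->; exact: (hproj y).1.
  have e1 : F x0 = F 0 by apply/eqP; rewrite eq_le (hfix x0) (hfix 0).
  have e2 : F (- x0) = F 0 by apply/eqP; rewrite eq_le (hfix (- x0)) (hfix 0).
  rewrite !hFg mulmx0 mulmxN -/u0 in e1 e2.
  have h1 := hscg 0 u0. have h2 := hscg 0 (- u0).
  rewrite !subr0 dotvNl norm2N e1 in h1 h2.
  rewrite e2 in h2.
  have : 0 < alpha * norm2 u0 ^+ 2 by rewrite mulr_gt0 // exprn_gt0.
  lra.
set z1 := proj y1 in hy1.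
have hHd := hHoff y1; rewrite -/z1 in hHd.
have hcHCH : cH * CH <= 1.
  have h1 : norm2 (H *m y1 - H *m z1) <= opnorm H * norm2 (y1 - z1).
    by rewrite -mulmxBr; exact: opnorm_ub.
  have h2 : norm2 (H *m y1 - H *m z1) ^+ 2 <= opnorm H ^+ 2 * norm2 (y1 - z1) ^+ 2.
    by rewrite -exprMn ler_pXn2r ?nnegrE ?norm2_ge0 ?mulr_ge0 ?opnorm_ge0 ?norm2_ge0.
  have h3 : cH <= opnorm H ^+ 2.
    by rewrite -(ler_pM2r (exprn_gt0 2 hy1)); apply: le_trans hHd h2.
  by rewrite -hCHo mulrC ler_pM2l.
have haL2 : alpha * cH <= L.
  set d := y1 - z1.
  have h1 := sc_mono hscg (H *m y1) (H *m z1).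
  rewrite -mulmxBr -/d -dotv_trmx in h1.
  rewrite (mulmxBr H^T (gg (H *m y1)) (gg (H *m z1))) -!hgradF -scalerBr -sumrB in h1.
  have h2 := CS ((n%:R)^-1 *: \sum_i (gf i y1 - gf i z1)) d.
  have h3 : norm2 ((n%:R)^-1 *: \sum_i (gf i y1 - gf i z1)) <= L * norm2 d.
    rewrite norm2Z ger0_norm ?invr_ge0 ?ler0n // ler_pdivrMl //.
    apply: le_trans (norm2_sum _) _.
    have -> : n%:R * (L * norm2 d) = \sum_(i < n) L * norm2 d.
      by rewrite sumr_const card_ord mulr_natl.
    by apply: ler_sum => i _; exact: hgfL.
  have h4 : cH * norm2 d ^+ 2 <= norm2 (H *m d) ^+ 2 by rewrite /d mulmxBr.
  have hd0 : 0 < norm2 d ^+ 2 by rewrite exprn_gt0.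
  have h5 := ler_wpM2r (norm2_ge0 d) h3.
  have h6 := ler_wpM2l (ltW ha) h4.
  have : alpha * cH * norm2 d ^+ 2 <= L * norm2 d ^+ 2 by rewrite expr2; lra.
  by rewrite ler_pM2r.
have hbeta0 : 0 <= beta by exact: opnorm_ge0.
have [[hJ hq0 hq1 hb0 hb1] [hgt hgam0 hgam1' hden]] :=
  consts ha haL hcH hmu hL hCHp hmuCH hcHCH haL2 hbeta0 hbeta hmucond.
rewrite -/q -/gamma in hq0 hq1 hgt hgam0 hgam1' hden.
set b := beta ^+ J in hb0 hb1 hden *.
set t := mu * L in hgt hden *.
set den := gamma - (t + gamma * (1 + t)) * b in hden.
have hRA : A0 <= Rr by rewrite /Rr le_max lexx.
have hRB : B0 <= gamma * Rr.
  have : B0 / gamma <= Rr by rewrite /Rr le_max (le_max _ (B0 / gamma)) lexx orbT.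
  by rewrite ler_pdivrMr // mulrC.
have hRD : mu * D * b <= Rr * den.
  have : mu * D * b / den <= Rr by rewrite /Rr le_max (le_max _ (B0 / gamma)) lexx !orbT.
  by rewrite ler_pdivrMr.
have hDs : has_sup Dset.
  split => //; have [z hz] := hXs.
  by exists (Num.sqrt (\sum_(j < n) norm2 (gf j z) ^+ 2)); exists z.
have hDz : forall z, Xs z -> snorm (fun j => gf j z) <= D.
  move=> z hz; apply: (sup_upper_bound hDs); by exists z.
have hD0 : 0 <= D.
  have [z hz] := hXs; exact: le_trans (snorm_ge0 _) (hDz z hz).
pose A' k := snorm (fun _ : 'I_n => xbar k - proj (xbar k)).
pose B' k := snorm (fun i => xbar k - x k i).
have eB' : forall k, B' k = snorm (fun i => x k i - xbar k).
  move=> k; rewrite /B' -snormN; apply: snorm_ext => i; by rewrite opprB.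
have hsq : Num.sqrt n%:R * Num.sqrt n%:R = n%:R :> R.
  by rewrite -expr2 sqr_sqrtr // ler0n.
have step : forall k, A' k.+1 <= q * A' k + t * B' k /\
                      B' k.+1 <= b * (B' k + mu * (L * (B' k + A' k) + D)).
  move=> k.
  pose y := fun j => x k j - mu *: gf j (x k j).
  have ex : x k.+1 = app (W ^+ J) y by apply: funext => i; exact: hdgd.
  have exbar : xbar k.+1 = avg y by rewrite /xbar ex avg_apppow.
  set P := (n%:R)^-1 *: \sum_j gf j (x k j).
  have eavg : avg y = xbar k - mu *: P.
    rewrite /avg /y /P /xbar /avg sumrB -scaler_sumr scalerBr !scalerA mulrC //.
  set z := proj (xbar k).
  have hz : Xs z := (hproj (xbar k)).1.
  split.
    have h1 : norm2 (xbar k.+1 - proj (xbar k.+1)) <= norm2 (xbar k.+1 - z).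
      exact: (hproj (xbar k.+1)).2 z hz.
    set Q := (n%:R)^-1 *: \sum_j (gf j (x k j) - gf j (xbar k)).
    have e2 : xbar k.+1 - z = (xbar k - mu *: (H^T *m gg (H *m xbar k)) - z) - mu *: Q.
      have eQ : Q = P - H^T *m gg (H *m xbar k) by rewrite /Q /P -hgradF sumrB scalerBr.
      rewrite exbar eavg eQ; apply/matrixP => i j; rewrite !mxE; ring.
    have h3 : norm2 (xbar k - mu *: (H^T *m gg (H *m xbar k)) - z) <= q * norm2 (xbar k - z).
      apply: le_sqrt_sq; [exact: norm2_ge0 | exact: norm2_ge0 |].
      exact: (contraction ha haL hmu (ltW hcH) hcc hCHo hmuCH (hHoff (xbar k)) (hzero z hz)).
    have h4 : norm2 (mu *: Q) <= mu * (n%:R)^-1 * (L * (Num.sqrt n%:R * B' k)).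
      rewrite norm2Z /Q norm2Z (ger0_norm (ltW hmu)) ger0_norm ?invr_ge0 ?ler0n // -mulrA.
      apply: ler_wpM2l; first exact: ltW.
      apply: ler_wpM2l; first by rewrite invr_ge0 ler0n.
      apply: le_trans (norm2_sum _) _.
      apply: le_trans (ler_sum _ (fun j _ => hgfL j (x k j) (xbar k))) _.
      rewrite -mulr_sumr; apply: ler_wpM2l; first exact: ltW.
      rewrite eB' snorm_en; exact: sum_le_en.
    have h5 : norm2 (xbar k.+1 - z) <= q * norm2 (xbar k - z) + mu * (n%:R)^-1 * (L * (Num.sqrt n%:R * B' k)).
      rewrite e2; apply: le_trans (norm2D _ _) _; rewrite norm2N; exact: lerD.
    rewrite /A' !snorm_const.
    have hsn : 0 <= Num.sqrt (n%:R : R) by exact: sqrtr_ge0.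
    have := ler_wpM2l hsn (le_trans h1 h5).
    have e6 : Num.sqrt n%:R * (q * norm2 (xbar k - z) + mu * (n%:R)^-1 * (L * (Num.sqrt n%:R * B' k)))
       = q * (Num.sqrt n%:R * norm2 (xbar k - z)) + t * B' k.
      rewrite /t mulrDr; congr (_ + _); first by rewrite mulrCA.
      have hn0 : (n%:R : R) != 0 by rewrite lt0r_neq0.
      have e : forall (sn nn a1 c1 d1 : R), sn * sn = nn -> nn != 0 ->
          sn * (a1 / nn * (c1 * (sn * d1))) = a1 * c1 * d1.
        move=> sn nn a1 c1 d1 h hn'.
        rewrite -[in RHS](mulr1 (a1 * c1 * d1)) -(mulfV hn') -{1}h; field.
        rewrite hn' /=; apply/eqP => e0; move: hn'; by rewrite -h e0 mul0r eqxx.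
      exact: e.
    by rewrite e6.
  have hc := @cons_bound R n p W y (xbar k) J n_gt0 hds hJ.
  rewrite -/beta -/b in hc.
  have eB1 : B' k.+1 = snorm (fun i => avg (app (W ^+ J) y) - app (W ^+ J) y i).
    by rewrite /B'; apply: snorm_ext => i; rewrite /xbar ex.
  rewrite eB1; apply: le_trans hc _; apply: ler_wpM2l => //.
  have e1 : (fun i => y i - xbar k) = (fun i => (x k i - xbar k) + (- mu) *: gf i (x k i)).
    by apply: funext => i; rewrite /y scaleNr addrAC.
  rewrite e1; apply: le_trans (snormD _ _) _; rewrite snormZ normrN (ger0_norm (ltW hmu)).
  rewrite -eB' -/(B' k); apply: lerD => //; apply: ler_wpM2l; first exact: ltW.
  have e2 : (fun i => gf i (x k i)) = (fun i => (gf i (x k i) - gf i z) + gf i z).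
    by apply: funext => i; rewrite subrK.
  rewrite e2; apply: le_trans (snormD _ _) _; apply: lerD; last exact: hDz.
  apply: le_trans (snorm_le (ltW hL) (fun i => hgfL i (x k i) z)) _.
  apply: ler_wpM2l; first exact: ltW.
  have e3 : (fun i => x k i - z) = (fun i => (x k i - xbar k) + (xbar k - z)).
    by apply: funext => i; rewrite addrA subrK.
  rewrite e3; apply: le_trans (snormD _ _) _; rewrite -eB'.
  by [].

have hnum := numeric (A := A') (B := B') (fun k => snorm_ge0 _) (fun k => snorm_ge0 _)
  hq0 hq1 hb0 hb1 hmu hL hD0 (erefl t) hgt hgam1' hgam0 hRA hRB hRD
  (fun k => (step k).1) (fun k => (step k).2).
exact: hnum.
Qed.
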